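(* Let $n\geq 0$ and $r\geq 0$ be integers and let $k\in\mathbf{Z}$. Then, as polynomials in $x$, \begin{align*} \tilde{A}_{n}^{(r,k)}(x)=\sum_{j=0}^{n}\Bigg\{\sum_{m=j}^{n}\sum_{l=0}^{m-j}(-1)^{m}\frac{\binom{m}{l}\binom{m-l}{j}}{\binom{m-l-j+r}{r}(l+1)^{k}}\, S_{1}(n,m)\,S_{2}(m-l-j+r,r)\Bigg\}(-x)^{j}. \end{align*}
   Context: For $k\in\mathbf{Z}$, the poly-logarithm factorial function is the formal power series $Lif_{k}(x)=\sum_{m=0}^{\infty}\frac{x^{m}}{m!(m+1)^{k}}$. For integers $r\geq 0$ and $k\in\mathbf{Z}$, the higher-order Cauchy of the second kind and poly-Cauchy of the second kind mixed type polynomials $\tilde{A}_{n}^{(r,k)}(x)$ are defined by the generating function \[\left(\frac{t}{(1+t)\log(1+t)}\right)^{r}Lif_{k}\left(-\log(1+t)\right)(1+t)^{x}=\sum_{n=0}^{\infty}\tilde{A}_{n}^{(r,k)}(x)\frac{t^{n}}{n!}.\] $S_{1}(n,m)$ denotes the (signed) Stirling numbers of the first kind, defined by $(x)_{n}=x(x-1)\cdots(x-n+1)=\sum_{m=0}^{n}S_{1}(n,m)x^{m}$, and $S_{2}(n,m)$ denotes the Stirling numbers of the second kind, defined by $\frac{(e^{x}-1)^{m}}{m!}=\sum_{l\geq m}S_{2}(l,m)\frac{x^{l}}{l!}$. *)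

(* Defs.v *)
From mathcomp Require Import all_boot all_order all_algebra.
Set Implicit Arguments. Unset Strict Implicit. Unset Printing Implicit Defensive.
Import Order.TTheory GRing.Theory Num.Theory.
Local Open Scope ring_scope.

Definition series (R : comRingType) := nat -> R.

Definition sone (R : comRingType) : series R := fun n => (n == 0%N)%:R.

Definition smul (R : comRingType) (f g : series R) : series R :=
  fun n => \sum_(i < n.+1) f i * g (n - i)%N.

Definition sexp (R : comRingType) (f : series R) (m : nat) : series R :=
  iter m (smul f) (sone R).

(* multiplicative inverse of a series with constant term 1:
   1/(1+h) = sum_j (-h)^j, h = f - 1 (only j <= n contribute to t^n) *)
Definition sinv (R : comRingType) (f : series R) : series R :=
  fun n => \sum_(j < n.+1) sexp (fun i => - (f i - sone R i)) j n.

(* composition F(g(t)) for a series g with zero constant term *)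
Definition scomp (R : comRingType) (F g : series R) : series R :=
  fun n => \sum_(m < n.+1) F m * sexp g m n.

Definition slift (f : series rat) : series {poly rat} := fun n => (f n)%:P.

Definition log1p : series rat :=
  fun m => if m is m'.+1 then (-1) ^+ m' / (m%:R) else 0.

Definition onept : series rat := fun n => (n <= 1)%N%:R.

(* (1+t) log(1+t) / t *)
Definition Qser : series rat := smul onept (fun m => log1p m.+1).

Definition Lif (k : int) : series rat :=
  fun m => ((m`!)%:R * ((m.+1)%:R) ^ k)^-1.

(* (1+t)^x = sum_n binom(x,n) t^n, x the polynomial variable *)
Definition binomx : series {poly rat} :=
  fun n => (\prod_(i < n) ('X - (i%:R)%:P)) * (((n`!)%:R : rat)^-1)%:P.

Definition genfun (r : nat) (k : int) : series {poly rat} :=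
  smul (smul (sexp (slift (sinv Qser)) r)
             (slift (scomp (Lif k) (fun m => - log1p m))))
       binomx.

Definition Atilde (n r : nat) (k : int) : {poly rat} := (n`!)%:R *: genfun r k n.

Definition Stirling1 (n m : nat) : int :=
  (\prod_(i < n) ('X - (i%:R)%:P) : {poly int})`_m.

Definition expm1 : series rat := fun n => if n == 0%N then 0 else ((n`!)%:R)^-1.

Definition Stirling2 (l m : nat) : rat :=
  (l`!)%:R * sexp expm1 m l / (m`!)%:R.

(* Main.v *)
Require Import Defs.
From mathcomp Require Import all_boot all_order all_algebra.
From mathcomp Require Import zify ring lra.
Import Order.TTheory GRing.Theory Num.Theory.
Local Open Scope ring_scope.

Section Gen.
Context {R : comRingType}.
Implicit Types (f g F G : series R) (p q : {poly R}).

Definition eqN N p q := forall i, (i < N)%N -> p`_i = q`_i.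
Definition tr N f : {poly R} := \poly_(i < N) f i.

Lemma eqN_refl N p : eqN N p p. Proof. by []. Qed.
Lemma eqN_sym N p q : eqN N p q -> eqN N q p. Proof. by move=> h i /h ->. Qed.
Lemma eqN_trans N p q s : eqN N p q -> eqN N q s -> eqN N p s.
Proof. by move=> h1 h2 i iN; rewrite h1 // h2. Qed.
Lemma eqN_add N p p' q q' : eqN N p p' -> eqN N q q' -> eqN N (p + q) (p' + q').
Proof. by move=> h1 h2 i iN; rewrite !coefD h1 // h2. Qed.
Lemma eqN_opp N p p' : eqN N p p' -> eqN N (- p) (- p').
Proof. by move=> h1 i iN; rewrite !coefN h1. Qed.
Lemma eqN_mul N p p' q q' : eqN N p p' -> eqN N q q' -> eqN N (p * q) (p' * q').
Proof.
move=> h1 h2 i iN; rewrite !coefM; apply: eq_bigr => j _.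
have hj := ltn_ord j.
rewrite h1 ?h2 //; lia.
Qed.
Lemma eqN_le N M p q : (M <= N)%N -> eqN N p q -> eqN M p q.
Proof. by move=> hM h i iM; apply: h; exact: leq_trans iM hM. Qed.

Arguments eqN_sym {N p q}.
Arguments eqN_trans {N p q s}.
Arguments eqN_add {N p p' q q'}.
Arguments eqN_mul {N p p' q q'}.
Arguments eqN_opp {N p p'}.

Lemma eqN_exp N p q m : eqN N p q -> eqN N (p ^+ m) (q ^+ m).
Proof. by move=> h; elim: m => [|m IH]; rewrite ?expr0 // !exprS; apply: eqN_mul. Qed.

Arguments eqN_exp {N p q} m.

Lemma coef_tr N f i : (tr N f)`_i = if (i < N)%N then f i else 0.
Proof. by rewrite coef_poly. Qed.
Lemma tr_coef N f i : (i < N)%N -> (tr N f)`_i = f i.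
Proof. by move=> h; rewrite coef_tr h. Qed.
Lemma tr_ext N f g : f =1 g -> tr N f = tr N g.
Proof. by move=> h; apply/polyP => i; rewrite !coef_tr h. Qed.

Lemma tr_smul N f g : eqN N (tr N (smul f g)) (tr N f * tr N g).
Proof.
move=> i iN; rewrite tr_coef // coefM /smul; apply: eq_bigr => j _.
have hj := ltn_ord j.
rewrite !tr_coef //; lia.
Qed.

Lemma tr_sone N : eqN N (tr N (sone R)) 1.
Proof. by move=> i iN; rewrite tr_coef // coef1 /sone. Qed.

Lemma tr_sexp N f m : eqN N (tr N (sexp f m)) (tr N f ^+ m).
Proof.
elim: m => [|m IH]; first exact: tr_sone.
rewrite exprS; apply: eqN_trans (tr_smul _ _ _) _.
exact: eqN_mul.
Qed.

Lemma expr_low p m i : p`_0 = 0 -> (i < m)%N -> (p ^+ m)`_i = 0.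
Proof.
move=> p0 im.
have -> : p = drop_poly 1 p * 'X.
  rewrite -{1}(poly_take_drop 1 p); rewrite [take_poly 1 p](_ : _ = 0) ?add0r //.
  by apply/polyP => j; rewrite coef_take_poly coef0; case: j => // ; rewrite p0.
by rewrite exprMn mulrC coefXnM im.
Qed.

Lemma sexp_low f m i : f 0%N = 0 -> (i < m)%N -> sexp f m i = 0.
Proof.
move=> f0 im; rewrite -(@tr_coef i.+1 (sexp f m) i) // tr_sexp //.
by apply: expr_low => //; rewrite tr_coef.
Qed.

Lemma comp_polyXn p q m : (p ^+ m) \Po q = (p \Po q) ^+ m.
Proof. by elim: m => [|m IH]; rewrite ?expr0 ?comp_polyC // !exprS comp_polyM IH. Qed.

Lemma comp_poly_sum (I : Type) (r : seq I) (P : pred I) (E : I -> {poly R}) q :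
  (\sum_(i <- r | P i) E i) \Po q = \sum_(i <- r | P i) (E i \Po q).
Proof. by apply: (big_morph (fun p => p \Po q)) => [x y|]; rewrite ?comp_polyD ?comp_poly0. Qed.

Lemma tr_scomp N F g : g 0%N = 0 -> eqN N (tr N (scomp F g)) (tr N F \Po tr N g).
Proof.
move=> g0 i iN; rewrite tr_coef // /scomp [tr N F]/tr poly_def comp_poly_sum coef_sum.
under [RHS]eq_bigr => m _ do rewrite comp_polyZ comp_polyXn comp_polyX coefZ -tr_sexp ?tr_coef //.
rewrite -(big_mkord xpredT (fun m => F m * sexp g m i)).
rewrite -(big_mkord xpredT (fun m => F m * sexp g m i)).
rewrite [RHS](@big_cat_nat _ _ _ i.+1) //= [X in _ + X]big1_seq ?addr0 //.
move=> m /andP[_]; rewrite mem_index_iota => /andP[hm _].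
by rewrite sexp_low ?mulr0.
Qed.

Lemma eqN_comp N p p' (T : {poly R}) : T`_0 = 0 -> eqN N p p' -> eqN N (p \Po T) (p' \Po T).
Proof.
move=> T0 h i iN; apply/eqP; rewrite -subr_eq0 -coefB -comp_polyB.
set d := p - p'.
rewrite comp_polyE coef_sum big1 // => j _.
rewrite coefZ; case: (ltnP j N) => jN.
  by rewrite /d coefB h // subrr mul0r.
by rewrite expr_low ?mulr0 //; exact: leq_trans iN jN.
Qed.


Lemma eqN_coef N f g : (forall i, (i < N)%N -> f i = g i) -> eqN N (tr N f) (tr N g).
Proof. by move=> h i iN; rewrite !tr_coef // h. Qed.

Lemma series_eq f g : (forall N, eqN N (tr N f) (tr N g)) -> f =1 g.
Proof. by move=> h n; rewrite -(@tr_coef n.+1 f) // h // tr_coef. Qed.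

Lemma smulC f g : smul f g =1 smul g f.
Proof.
apply: series_eq => N; apply: eqN_trans (tr_smul _ _ _) _.
rewrite mulrC; apply: eqN_sym; exact: tr_smul.
Qed.

Lemma sinvP f g : f 0%N = 1 -> smul f g =1 sone R -> sinv f =1 g.
Proof.
move=> f1 hfg; apply: series_eq => N.
pose h := fun i => - (f i - sone R i).
have h0 : h 0%N = 0 by rewrite /h f1 /sone subrr oppr0.
set H := tr N h.
have e1 : eqN N (tr N (sinv f)) (\sum_(j < N) H ^+ j).
  apply: eqN_trans (_ : eqN N _ (tr N (scomp (fun _ => 1) h))) _.
    by apply: eqN_coef => i _; rewrite /sinv /scomp; apply: eq_bigr => j _; rewrite mul1r.
  apply: eqN_trans (tr_scomp N (fun _ => 1) h h0) _.
  have -> : tr N (fun _ => 1) = \sum_(j < N) 'X^j.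
    by rewrite /tr poly_def; apply: eq_bigr => j _; rewrite scale1r.
  rewrite comp_poly_sum; under eq_bigr => j _ do rewrite comp_polyXn comp_polyX.
  exact: eqN_refl.
have e2 : eqN N (tr N f) (1 - H).
  move=> i iN; rewrite coefB /H !tr_coef // /h opprB. rewrite -(@tr_sone N i iN) tr_coef //; by rewrite opprB addrC subrK.
have e3 : eqN N (tr N f * tr N g) 1.
  apply: eqN_trans (eqN_sym (tr_smul _ _ _)) _.
  by apply: eqN_trans (tr_sone N); apply: eqN_coef => i _; rewrite hfg.
have e4 : eqN N ((1 - H) * \sum_(j < N) H ^+ j) 1.
  have -> : (1 - H) * \sum_(j < N) H ^+ j = 1 - H ^+ N.
    by rewrite -[1 - H ^+ N]opprB subrX1 -[1 - H]opprB mulNr.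
  move=> i iN; rewrite coefB expr_low ?subr0 // /H tr_coef //.
  by apply: leq_ltn_trans iN.
apply: eqN_trans e1 _.
apply: eqN_trans (_ : eqN N _ ((\sum_(j < N) H ^+ j) * (tr N f * tr N g))) _.
  by rewrite -[X in eqN _ X _]mulr1; apply: eqN_mul => //; apply: eqN_sym.
rewrite mulrA; apply: eqN_trans (_ : eqN N _ (1 * tr N g)) _; last by rewrite mul1r.
apply: eqN_mul => //; rewrite mulrC.
apply: eqN_trans (_ : eqN N _ ((1 - H) * \sum_(j < N) H ^+ j)) _ => //.
exact: eqN_mul.
Qed.

Lemma smul_ext f f' g g' : f =1 f' -> g =1 g' -> smul f g =1 smul f' g'.
Proof. by move=> h1 h2 n; apply: eq_bigr => i _; rewrite h1 h2. Qed.
Lemma sexp_ext f f' m : f =1 f' -> sexp f m =1 sexp f' m.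
Proof. by move=> h; elim: m => [|m IH] //= n; apply: smul_ext. Qed.
Lemma scomp_ext F F' g g' : F =1 F' -> g =1 g' -> scomp F g =1 scomp F' g'.
Proof. by move=> h1 h2 n; apply: eq_bigr => i _; rewrite h1 (@sexp_ext g g' i h2). Qed.

Lemma sexp_at0 f m : sexp f m 0%N = f 0%N ^+ m.
Proof.
elim: m => [|m IH]; first by rewrite /= /sone expr0.
by rewrite /= /smul big_ord1 IH exprS.
Qed.

Lemma sexp_scaleX (c : R) f m n :
  sexp (fun i => c ^+ i * f i) m n = c ^+ n * sexp f m n.
Proof.
elim: m n => [|m IH] n /=.
  by rewrite /sone; case: n => [|n]; rewrite ?expr0 ?mul1r ?mulr0.
rewrite /smul mulr_sumr; apply: eq_bigr => i _; rewrite IH.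
have hi := ltn_ord i.
have -> : c ^+ n = c ^+ i * c ^+ (n - i) by rewrite -exprD subnKC. 
ring.
Qed.

Lemma sexp_scale (c : R) f m n :
  sexp (fun i => c * f i) m n = c ^+ m * sexp f m n.
Proof.
elim: m n => [|m IH] n /=; first by rewrite expr0 mul1r.
rewrite /smul mulr_sumr; apply: eq_bigr => i _; rewrite IH exprS; ring.
Qed.

Definition shiftS f : series R := fun n => if n is n'.+1 then f n' else 0.

Lemma sexp_shift f r i : sexp (shiftS f) r (i + r) = sexp f r i.
Proof.
set N := (i + r).+1.
rewrite -(@tr_coef N) // tr_sexp //.
have e : eqN N (tr N (shiftS f)) ('X * tr N f).
  move=> j jN; rewrite coefXM tr_coef //; case: j jN => [|j] jN //=.
  by rewrite tr_coef //; apply: ltnW.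
rewrite (_ : (tr N (shiftS f) ^+ r)`_(i + r) = (('X * tr N f) ^+ r)`_(i + r)); last first.
  by apply: (eqN_exp r e); rewrite /N; lia.
rewrite exprMn coefXnM ltnNge leq_addl /= addnK -tr_sexp ?tr_coef //.
all: rewrite /N; lia.
Qed.

End Gen.
Arguments eqN_sym {R N p q}.
Arguments eqN_trans {R N p q s}.
Arguments eqN_add {R N p p' q q'}.
Arguments eqN_mul {R N p p' q q'}.
Arguments eqN_opp {R N p p'}.
Arguments eqN_exp {R N p q} m.

Section Lift.
Implicit Types f g F : series rat.

Lemma slift_smul f g n : smul (slift f) (slift g) n = slift (smul f g) n.
Proof. by rewrite /slift /smul rmorph_sum; apply: eq_bigr => i _; rewrite -polyCM. Qed.

Lemma slift_sexp f m n : sexp (slift f) m n = slift (sexp f m) n.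
Proof.
elim: m n => [|m IH] n /=; first by rewrite /slift /sone polyC_natr.
rewrite -slift_smul; apply: eq_bigr => i _; by rewrite IH.
Qed.

Lemma slift_scomp F g n : scomp (slift F) (slift g) n = slift (scomp F g) n.
Proof.
rewrite /slift /scomp rmorph_sum; apply: eq_bigr => i _.
by rewrite slift_sexp -polyCM.
Qed.
End Lift.
Definition ffi n : {poly int} := \prod_(i < n) ('X - (i%:R)%:P).

Lemma ffiS n : ffi n.+1 = ffi n * 'X - ffi n * (n%:R)%:P.
Proof. by rewrite /ffi big_ord_recr /= mulrBr. Qed.

Lemma S1_0 m : Stirling1 0 m = (m == 0)%:R.
Proof. by rewrite /Stirling1 big_ord0 coef1. Qed.

Lemma S1_S0 n : Stirling1 n.+1 0 = - (Stirling1 n 0 * n%:R).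
Proof. by rewrite /Stirling1 -/(ffi _) ffiS coefB coefMX coefMC sub0r. Qed.

Lemma S1_SS n m : Stirling1 n.+1 m.+1 = Stirling1 n m - Stirling1 n m.+1 * n%:R.
Proof. by rewrite /Stirling1 -/(ffi _) ffiS coefB coefMX coefMC. Qed.

Lemma S1_big n m : (n < m)%N -> Stirling1 n m = 0.
Proof.
elim: n m => [|n IH] [|m] //= h; first by rewrite S1_0.
by rewrite S1_SS !IH ?mul0r ?subrr //; lia.
Qed.

Definition cc n m : rat := sexp log1p m n.

Lemma cc0m m : cc 0 m = (m == 0)%:R.
Proof. by rewrite /cc sexp_at0 /log1p expr0n. Qed.

Lemma ccn0 n : cc n 0 = (n == 0)%:R.
Proof. by []. Qed.

Lemma cc_rec n m :
  cc n.+1 m.+1 * n.+1%:R + cc n m.+1 * n%:R = cc n m * m.+1%:R.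
Proof.
set N := n.+2.
set P := tr N log1p.
have hD : eqN n.+1 (('X + 1) * P^`()) 1.
  move=> j jn; rewrite mulrDl mul1r coefD coefXM !coef_deriv coef1 !coef_tr.
  case: j jn => [|j] jn /=.
    by rewrite expr0 divr1 add0r.
  have h1 : (j.+1 < N)%N by rewrite /N; lia.
  have h2 : (j.+2 < N)%N by rewrite /N; lia.
  have key : forall (x : rat) k, x / k.+1%:R *+ k.+1 = x.
    by move=> x k; rewrite -mulr_natr divfK // pnatr_eq0.
  by rewrite h1 h2 !key exprS mulN1r addrN.
have hc : forall a b, (a < N)%N -> cc a b = (P ^+ b)`_a.
  by move=> a b ha; rewrite /cc -(tr_sexp N log1p b a ha) tr_coef.
have E : ('X + 1) * (P ^+ m.+1)^`() = (('X + 1) * P^`()) * P ^+ m *+ m.+1.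
  by rewrite deriv_exp /= mulrnAr !mulrA.
have L1 : (('X + 1) * (P ^+ m.+1)^`())`_n = cc n.+1 m.+1 * n.+1%:R + cc n m.+1 * n%:R.
  rewrite mulrDl mul1r coefD coefXM !coef_deriv !mulr_natr.
  have hn1 : (n.+1 < N)%N by [].
  rewrite (hc _ _ hn1) (hc n _ (ltnW hn1)) addrC; congr (_ + _).
  by case: (n) => [|n'] //=; rewrite mulr0n.
have R1 : ((('X + 1) * P^`()) * P ^+ m *+ m.+1)`_n = cc n m * m.+1%:R.
  by rewrite coefMn (eqN_mul hD (eqN_refl _ _)) // mul1r -hc ?mulr_natr // /N.
by rewrite -L1 -R1 E.
Qed.

Definition s1 n m : rat := (Stirling1 n m)%:~R.

Lemma s1_SS n m : s1 n.+1 m.+1 = s1 n m - s1 n m.+1 * n%:R.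
Proof. by rewrite /s1 S1_SS rmorphB rmorphM /= rmorph_nat. Qed.
Lemma s1_S0 n : s1 n.+1 0 = - (s1 n 0 * n%:R).
Proof. by rewrite /s1 S1_S0 rmorphN rmorphM /= rmorph_nat. Qed.
Lemma s1_0 m : s1 0 m = (m == 0)%:R.
Proof. by rewrite /s1 S1_0 rmorph_nat. Qed.
Lemma s1_big n m : (n < m)%N -> s1 n m = 0.
Proof. by move=> h; rewrite /s1 S1_big. Qed.

Lemma ccA n m : cc n m * n`!%:R = m`!%:R * s1 n m.
Proof.
elim: n m => [|n IH] m.
  rewrite cc0m s1_0 fact0 mulr1; case: m => //= m. by rewrite mulr0.
case: m => [|m].
  rewrite ccn0 /= mul0r s1_S0 fact0 mul1r.
  have := IH 0%N; rewrite ccn0 fact0 mul1r => <-.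
  by case: (n) => [|n'] /=; rewrite ?mulr0 ?mul0r ?oppr0.
have r := cc_rec n m.
rewrite factS natrM mulrA.
have -> : cc n.+1 m.+1 * n.+1%:R = cc n m * m.+1%:R - cc n m.+1 * n%:R.
  by rewrite -r addrK.
rewrite mulrBl s1_SS factS natrM.
have e1 := IH m; have e2 := IH m.+1.
rewrite (_ : cc n m * m.+1%:R * n`!%:R = m.+1%:R * (cc n m * n`!%:R)); last by ring.
rewrite (_ : cc n m.+1 * n%:R * n`!%:R = n%:R * (cc n m.+1 * n`!%:R)); last by ring.
rewrite e1 e2 factS natrM; ring.
Qed.

Definition ffr n : {poly rat} := \prod_(i < n) ('X - (i%:R)%:P).

Lemma ffr_coef n j : (ffr n)`_j = s1 n j.
Proof.
elim: n j => [|n IH] j; first by rewrite /ffr big_ord0 coef1 s1_0.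
rewrite /ffr big_ord_recr /= -/(ffr n) mulrBr coefB coefMX coefMC.
case: j => [|j] /=; first by rewrite s1_S0 sub0r IH.
by rewrite s1_SS !IH.
Qed.

Definition Ex m : {poly rat} := ((m`!%:R)^-1)%:P * 'X^m.

Lemma binomx_eq n : binomx n = \sum_(m < n.+1) Ex m * (cc n m)%:P.
Proof.
have -> : \sum_(m < n.+1) Ex m * (cc n m)%:P =
          \poly_(m < n.+1) ((m`!%:R)^-1 * cc n m).
  rewrite poly_def; apply: eq_bigr => m _.
  by rewrite /Ex mulrC mulrA -polyCM mul_polyC mulrC.
apply/polyP => j; rewrite /binomx -/(ffr n) coefMC ffr_coef coef_poly.
case: ifP => hj.
  have := ccA n j => e.
  apply: (mulIf (_ : (n`!%:R : rat) != 0)); first by rewrite pnatr_eq0 -lt0n fact_gt0.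
  rewrite mulfVK ?pnatr_eq0 -?lt0n ?fact_gt0 // -mulrA e mulrA mulVf ?mul1r //.
  by rewrite pnatr_eq0 -lt0n fact_gt0.
by rewrite s1_big ?mul0r //; rewrite ltnNge; move/negbT: hj; rewrite ltnS.
Qed.

Lemma prod_m1 n : \prod_(i < n) (-1 - i%:R : rat) = (-1) ^+ n * n`!%:R.
Proof.
elim: n => [|n IH]; first by rewrite big_ord0 expr0 mul1r.
rewrite big_ord_recr /= IH factS natrM exprS.
have -> : -1 - n%:R = - (n.+1%:R : rat) by rewrite -natr1 opprD addrC.
ring.
Qed.

Definition em m : rat := (-1) ^+ m / m`!%:R.

Lemma scomp_em n : scomp em log1p n = (-1) ^+ n.
Proof.
have := congr1 (fun p => p.[-1]) (binomx_eq n).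
rewrite /binomx -/(ffr n) hornerM hornerC /ffr horner_prod.
under eq_bigr => i _ do rewrite hornerXsubC.
rewrite prod_m1 mulfK ?pnatr_eq0 -?lt0n ?fact_gt0 // => ->.
rewrite horner_sum /scomp; apply: eq_bigr => m _.
rewrite /Ex !hornerM !hornerC hornerXn /em -/(cc n m); ring.
Qed.

Lemma alt_onept : smul onept (fun n => (-1) ^+ n) =1 sone rat.
Proof.
move=> [|n]; first by rewrite /smul big_ord1 /onept /sone /= mulr1.
rewrite /smul big_ord_recl big_ord_recl big1 ?addr0.
  by rewrite /onept /sone /= !mul1r subn0 /bump /= subSS subn0 exprS mulN1r addNr.
by move=> i _; rewrite /onept /= /bump /= !add1n mul0r.
Qed.

Definition Pser i : rat := (-1) ^+ i / (i.+1)`!%:R.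

Lemma Q0 : Qser 0 = 1.
Proof. by rewrite /Qser /smul big_ord1 /onept /log1p /= expr0 divr1. Qed.

Lemma QP : smul Qser (scomp Pser log1p) =1 sone rat.
Proof.
move=> n; set N := n.+2.
set T := tr N log1p; set Ld := tr N (fun m => log1p m.+1).
set Em := tr N em; set Pp := tr N Pser.
have T0 : T`_0 = 0 by rewrite tr_coef.
have L0 : log1p 0 = 0 by [].
have ha : eqN N (tr N Qser) (('X + 1) * Ld).
  apply: eqN_trans (tr_smul _ _ _) _; apply: eqN_mul => // j jN.
  rewrite tr_coef // coefD coefX coef1 /onept.
  by case: j {jN} => [|[|jj]].
have hb : eqN N ('X * Ld) T.
  move=> j jN; rewrite coefXM; case: j jN => [|j] jN /=.
    by rewrite tr_coef.
  by rewrite !tr_coef //; apply: ltnW.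
have hc : eqN N ('X * Pp) (1 - Em).
  move=> j jN; rewrite coefXM coefB coef1; case: j jN => [|j] jN /=.
    by rewrite tr_coef // /em expr0 divr1 subrr.
  rewrite !tr_coef //; last by apply: ltnW.
  by rewrite sub0r /em /Pser exprS mulN1r mulNr opprK.
have hd : eqN N ((Em \Po T) * ('X + 1)) 1.
  apply: eqN_trans (_ : eqN N _ (tr N (fun n => (-1) ^+ n) * tr N onept)) _.
    apply: eqN_mul.
      apply: eqN_trans (eqN_sym (tr_scomp N em log1p L0)) _.
      by rewrite (tr_ext N _ _ scomp_em).
    move=> j jN; rewrite tr_coef // coefD coefX coef1 /onept.
    by case: j {jN} => [|[|jj]].
  apply: eqN_trans (eqN_sym (tr_smul _ _ _)) _.
  apply: eqN_trans (tr_sone N).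
  by rewrite (tr_ext N _ _ (smulC _ _)) (tr_ext N _ _ alt_onept).
set A := tr N Qser * tr N (scomp Pser log1p).
have key : eqN N ('X * A) 'X.
  apply: eqN_trans (_ : eqN N _ ('X * ((('X + 1) * Ld) * (Pp \Po T)))) _.
    by apply: eqN_mul => //; apply: eqN_mul => //; apply: tr_scomp.
  rewrite (_ : 'X * (('X + 1) * Ld * (Pp \Po T)) = ('X + 1) * (('X * Ld) * (Pp \Po T))); last by ring.
  apply: eqN_trans (_ : eqN N _ (('X + 1) * (T * (Pp \Po T)))) _.
    by apply: eqN_mul => //; apply: eqN_mul.
  rewrite -{1}[T]comp_polyX -comp_polyM.
  apply: eqN_trans (_ : eqN N _ (('X + 1) * ((1 - Em) \Po T))) _.
    by apply: eqN_mul => //; apply: eqN_comp.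
  rewrite comp_polyB -polyC1 comp_polyC polyC1.
  rewrite (_ : ('X + 1) * (1 - (Em \Po T)) = ('X + 1) - (Em \Po T) * ('X + 1)); last by ring.
  rewrite -[X in eqN _ _ X](addrK 1 'X).
  by apply: eqN_add => //; apply: eqN_opp.
have := key n.+1 (ltnSn _).
rewrite coefXM /= coefX /A -(tr_smul _ _ _ _ (ltnW (ltnSn _))) tr_coef //.
Qed.

Lemma sinvQ : sinv Qser =1 scomp Pser log1p.
Proof. exact: (sinvP _ _ Q0 QP). Qed.

Definition Pp i : rat := ((i.+1)`!%:R)^-1.

Lemma Pr_eq r i : sexp Pser r i = (-1) ^+ i * sexp expm1 r (i + r).
Proof.
rewrite (sexp_ext _ _ r (_ : Pser =1 fun i => (-1) ^+ i * Pp i)) // sexp_scaleX.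
rewrite (sexp_ext _ _ r (_ : expm1 =1 shiftS Pp)) ?sexp_shift //.
by case.
Qed.

Definition LifN (k : int) l : rat := (-1) ^+ l * Lif k l.

Lemma Lif_eq k : scomp (Lif k) (fun m => - log1p m) =1 scomp (LifN k) log1p.
Proof.
move=> n; apply: eq_bigr => m _.
rewrite (sexp_ext _ _ m (_ : (fun m => - log1p m) =1 fun m => (-1) * log1p m)).
  by rewrite sexp_scale /LifN mulrA [Lif k m * _]mulrC.
by move=> x; rewrite mulN1r.
Qed.

Definition Hs r k : series {poly rat} :=
  smul Ex (smul (slift (LifN k)) (sexp (slift Pser) r)).

Lemma genfun_eq n r k :
  genfun r k n = \sum_(m < n.+1) Hs r k m * (cc n m)%:P.
Proof.
set N := n.+1; set sL := slift log1p.
have sL0 : sL 0%N = 0 by rewrite /sL /slift /= polyC0.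
set TL := tr N sL.
have TL0 : TL`_0 = 0 by rewrite tr_coef.
have f1 : slift (sinv Qser) =1 scomp (slift Pser) sL.
  by move=> m; rewrite slift_scomp /slift sinvQ.
have f2 : slift (scomp (Lif k) (fun m => - log1p m)) =1 scomp (slift (LifN k)) sL.
  by move=> m; rewrite slift_scomp /slift Lif_eq.
have f3 : binomx =1 scomp Ex sL.
  move=> m; rewrite binomx_eq; apply: eq_bigr => i _.
  by rewrite /sL slift_sexp.
have e : eqN N (tr N (genfun r k)) (tr N (Hs r k) \Po TL).
  apply: eqN_trans (tr_smul _ _ _) _.
  apply: eqN_trans (eqN_mul (tr_smul _ _ _) (eqN_refl _ _)) _.
  apply: eqN_trans (eqN_mul (eqN_mul (tr_sexp _ _ _) (eqN_refl _ _)) (eqN_refl _ _)) _.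
  rewrite (tr_ext N _ _ f1) (tr_ext N _ _ f2) (tr_ext N _ _ f3).
  apply: eqN_trans (eqN_mul (eqN_mul (eqN_exp r (tr_scomp _ _ _ sL0))
                               (tr_scomp _ _ _ sL0)) (tr_scomp _ _ _ sL0)) _.
  rewrite -comp_polyXn -!comp_polyM.
  apply: eqN_comp => //.
  apply: eqN_sym; apply: eqN_trans (tr_smul _ _ _) _.
  apply: eqN_trans (eqN_mul (eqN_refl _ _) (tr_smul _ _ _)) _.
  apply: eqN_trans (eqN_mul (eqN_refl _ _) (eqN_mul (eqN_refl _ _) (tr_sexp _ _ _))) _.
  rewrite (_ : tr N Ex * (tr N (slift (LifN k)) * tr N (slift Pser) ^+ r) =
     tr N (slift Pser) ^+ r * tr N (slift (LifN k)) * tr N Ex); last by ring.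
  exact: eqN_refl.
have := e n (ltnSn n).
rewrite -(tr_scomp _ _ _ sL0) // !tr_coef // => ->.
apply: eq_bigr => m _; by rewrite /sL slift_sexp.
Qed.

Lemma term_eq (m l j r : nat) (k : int) (s : rat) :
  (j <= m)%N -> (l <= m - j)%N ->
  (j`!%:R)^-1 * LifN k l * sexp Pser r (m - j - l)%N * (m`!%:R * s) =
  (-1) ^+ j * ((-1) ^+ m * ('C(m, l) * 'C(m - l, j))%:R
     / (('C(m - l - j + r, r))%:R * ((l.+1)%:R) ^ k) * s * Stirling2 (m - l - j + r) r).
Proof.
move=> hj hl.
rewrite -subnDA addnC subnDA.
set i := (m - l - j)%N.
have hm : (m`!%:R : rat) = 'C(m, l)%:R * (l`!%:R * ('C(m - l, j)%:R * (j`!%:R * i`!%:R))).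
  rewrite -!natrM -(bin_fact (_ : (l <= m)%N)); last by lia.
  by rewrite -(bin_fact (_ : (j <= m - l)%N)); [rewrite -/i; ring|lia].
have hir : ((i + r)`!%:R : rat) = 'C(i + r, r)%:R * (r`!%:R * i`!%:R).
  by rewrite -!natrM -(bin_fact (_ : (r <= i + r)%N)) ?leq_addl // addnK.
have hs : (-1) ^+ j * (-1) ^+ m = (-1) ^+ l * (-1) ^+ i :> rat.
  rewrite -!exprD (_ : (j + m = (l + i) + j.*2)%N); last by rewrite /i -addnn; lia.
  by rewrite exprD -muln2 mulnC exprM sqrrN !expr1n mulr1.
rewrite Pr_eq /LifN /Lif /Stirling2 hm hir !mulrA hs.
have hk : ((l.+1)%:R : rat) ^ k != 0 by rewrite expfz_neq0 // pnatr_eq0.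
have f1 : (j`!%:R : rat) != 0 by rewrite pnatr_eq0 -lt0n fact_gt0.
have f2 : (l`!%:R : rat) != 0 by rewrite pnatr_eq0 -lt0n fact_gt0.
have f3 : (i`!%:R : rat) != 0 by rewrite pnatr_eq0 -lt0n fact_gt0.
have f4 : (r`!%:R : rat) != 0 by rewrite pnatr_eq0 -lt0n fact_gt0.
have c1 : ('C(i + r, r)%:R : rat) != 0 by rewrite pnatr_eq0 -lt0n bin_gt0 leq_addl.
have c2 : ('C(m, l)%:R : rat) != 0 by rewrite pnatr_eq0 -lt0n bin_gt0; lia.
have c3 : ('C(m - l, j)%:R : rat) != 0 by rewrite pnatr_eq0 -lt0n bin_gt0; lia.
rewrite natrM.
move: hk f1 f2 f3 f4 c1 c2 c3.
move: (sexp expm1 r (i + r)) ((l.+1)%:R ^ k) (j`!%:R) (l`!%:R) (i`!%:R) (r`!%:R) ('C(i + r, r)%:R) ('C(m, l)%:R) ('C(m - l, j)%:R).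
move=> *; field; by apply/and5P; split.
Qed.

Lemma tri (V : zmodType) n (F : nat -> nat -> V) :
  \sum_(0 <= j < n.+1) \sum_(j <= m < n.+1) F j m =
  \sum_(m < n.+1) \sum_(j < m.+1) F j m.
Proof.
rewrite (eq_bigr (fun m : 'I_n.+1 => \sum_(0 <= j < m.+1) F j m)); last first.
  by move=> m _; rewrite big_mkord.
rewrite -(big_mkord xpredT (fun m => \sum_(0 <= j < m.+1) F j m)).
elim: n => [|n IH]; first by rewrite !big_nat1.
have e1 : \sum_(0 <= j < n.+1) \sum_(j <= m < n.+2) F j m =
   \sum_(0 <= j < n.+1) \sum_(j <= m < n.+1) F j m + \sum_(0 <= j < n.+1) F j n.+1.
  rewrite -big_split; apply: eq_big_nat => j /andP[_ hj].
  by rewrite big_nat_recr //; apply: ltnW.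
rewrite big_nat_recr //= e1 IH big_nat1 [in RHS]big_nat_recr //= big_nat_recr //=.
by rewrite [X in _ = _ + X]big_nat_recr //= addrA.
Qed.

Definition RT n r k m l j : rat :=
  (-1) ^+ m * ('C(m, l) * 'C(m - l, j))%:R
          / (('C(m - l - j + r, r))%:R * ((l.+1)%:R) ^ k)
          * (Stirling1 n m)%:~R * Stirling2 (m - l - j + r) r.

Theorem theorem1 (n r : nat) (k : int) :
  Atilde n r k =
  \sum_(j < n.+1)
    (\sum_(j <= m < n.+1) \sum_(l < (m - j).+1)
        ((-1) ^+ m * ('C(m, l) * 'C(m - l, j))%:R
          / (('C(m - l - j + r, r))%:R * ((l.+1)%:R) ^ k)
          * (Stirling1 n m)%:~R * Stirling2 (m - l - j + r) r))%:P
    * (- 'X) ^+ j.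
Proof.
change (Atilde n r k = \sum_(j < n.+1) (\sum_(j <= m < n.+1) \sum_(l < (m - j).+1) RT n r k m l j)%:P * (- 'X) ^+ j).
rewrite -(big_mkord xpredT (fun j => (\sum_(j <= m < n.+1) \sum_(l < (m - j).+1) RT n r k m l j)%:P * (- 'X) ^+ j)).
rewrite (eq_big_nat _ _ (F2 := fun j => \sum_(j <= m < n.+1) \sum_(l < (m - j).+1) (RT n r k m l j)%:P * (- 'X) ^+ j)); last first.
  move=> j _; rewrite rmorph_sum big_distrl; apply: eq_big_nat => m _.
  by rewrite rmorph_sum big_distrl.
rewrite (tri _ n (fun j m => \sum_(l < (m - j).+1) (RT n r k m l j)%:P * (- 'X) ^+ j)).
rewrite /Atilde genfun_eq scaler_sumr; apply: eq_bigr => m _.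
rewrite -mul_polyC mulrC -mulrA -polyCM ccA.
rewrite /Hs /smul big_distrl; apply: eq_bigr => j _.
rewrite big_distrr big_distrl; apply: eq_bigr => l _.
have hj : (j <= m)%N by rewrite -ltnS.
have hl : (l <= m - j)%N by rewrite -ltnS.
have te := @term_eq m l j r k (s1 n m) hj hl.
rewrite slift_sexp /slift /Ex.
transitivity (((j`!%:R)^-1 * LifN k l * sexp Pser r (m - j - l)%N * (m`!%:R * s1 n m))%:P * 'X^j).
  by rewrite /= !polyCM; ring.
rewrite te polyCM [(- 'X) ^+ j]exprNn polyC_exp polyCN polyC1 /RT /s1; ring.
Qed.
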